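(* For the algorithm in the context, under the standing assumptions, Assumption (R) and Assumption (A), there exists a finite $\bar\rho$ such that $\rho^{(i)}\le\bar\rho$ for all $i$.
   Context: Problem: $\min_{z\in\mathbb{R}^n}J(z)$ s.t. $g(z)\le0$, $h(z)=0$, with $J,g,h$ twice continuously differentiable ($g:\mathbb{R}^n\to\mathbb{R}^m$, $h:\mathbb{R}^n\to\mathbb{R}^p$), finitely many critical points; $(z^\star,\lambda^\star,\nu^\star)$ denotes the KKT triple of the critical point to which the iterates converge. Augmented Lagrangian: $\mathcal{L}_{\mathrm{aug}}^{\rho}(z,\lambda,\nu,s)=J(z)+(g(z)+s)^\top\lambda+h(z)^\top\nu+\frac{\rho}{2}\|g(z)+s\|^2+\frac{\rho}{2}\|h(z)\|^2$. Algorithm (iteration $i$): $d_z^{(i)}$ is the Euclidean projection of $-\alpha^{(i)}\nabla J(z^{(i)})$ (bounded $\alpha^{(i)}>0$) onto $\mathcal{C}^{(i)}=\{d: g(z^{(i)})+\nabla g(z^{(i)})^\top d\le0,\ h(z^{(i)})+\nabla h(z^{(i)})^\top d=0\}$ with KKT multipliers $\lambda_G^{(i)}\ge0,\nu_G^{(i)}$; $\lambda^{(0)}=\lambda_G^{(0)}$, $\nu^{(0)}=\nu_G^{(0)}$, $d_\lambda^{(i)}=\lambda_G^{(i)}-\lambda^{(i)}$, $d_\nu^{(i)}=\nu_G^{(i)}-\nu^{(i)}$; slack $s^{(i)}_j=\max\{0,-g_j(z^{(i)})\}$ if $\rho=0$, otherwise $\max\{0,-g_j(z^{(i)})-\lambda_j^{(i)}/\rho\}$;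 $d_s^{(i)}$ solves $g(z^{(i)})+\nabla g(z^{(i)})^\top d_z^{(i)}+s^{(i)}+d_s^{(i)}=0$. With $\phi(t,\rho)=\mathcal{L}^\rho_{\mathrm{aug}}(z^{(i)}+td_z^{(i)},\lambda^{(i)}+td_\lambda^{(i)},\nu^{(i)}+td_\nu^{(i)},s^{(i)}+td_s^{(i)})$, the penalty is $\rho^{(i)}=\rho^{(i-1)}$ if $\phi'(0,\rho^{(i-1)})\le-\frac{1}{2\alpha^{(i)}}\|d_z^{(i)}\|^2$, else $\rho^{(i)}=\max\{\hat\rho^{(i)},2\rho^{(i-1)}\}$ with $\hat\rho^{(i)}=2\|[d_\lambda^{(i)};d_\nu^{(i)}]\|/\|[g(z^{(i)})+s^{(i)};h(z^{(i)})]\|$. A step size $t^{(i)}\in(0,1]$ satisfies the Wolfe conditions $\phi(t)-\phi(0)\le\sigma_1t\phi'(0)$ and ($|\phi'(t)|\le-\sigma_2\phi'(0)$ or ($t=1$ and $\phi'(1)\le-\sigma_2\phi'(0)$)), $0<\sigma_1\le\sigma_2<\frac12$; then $(z,\lambda,\nu,s)\leftarrow(z,\lambda,\nu,s)+t^{(i)}(d_z,d_\lambda,d_\nu,d_s)$. Standing assumptions: $\mathcal{C}^{(i)}\ne\emptyset$ for all $i$; all $z^{(i)}$, $z^{(i)}+d_z^{(i)}$ lie in a compact set $\Omega$; $J,g,h$ and their first and second derivatives are uniformly bounded on $\Omega$. Assumption (R): for all $i$, $\nabla h(z^{(i)})$ together with the columns $\nabla g_j(z^{(i)})$ for $j$ active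 in the projection problem has full column rank, and strict complementarity holds. Assumption (A): for all sufficiently large $i$, $z^{(i)}+d_z^{(i)}-z^\star=o(\|z^{(i)}-z^\star\|)$, $\lambda^{(i)}+d_\lambda^{(i)}-\lambda^\star=o(\|\lambda^{(i)}-\lambda^\star\|)$, $\nu^{(i)}+d_\nu^{(i)}-\nu^\star=o(\|\nu^{(i)}-\nu^\star\|)$, and $[d_\lambda^{(i)};d_\nu^{(i)}]=\mathcal{O}(\|d_z^{(i)}\|)$. *)

(* Defs.v *)
From HB Require Import structures.
From mathcomp Require Import all_boot all_order all_algebra.
From mathcomp Require Import all_classical all_reals all_analysis.
Set Implicit Arguments. Unset Strict Implicit. Unset Printing Implicit Defensive.
Import Order.TTheory GRing.Theory Num.Theory.
Import numFieldNormedType.Exports.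
Local Open Scope ring_scope.
Local Open Scope classical_set_scope.

Section Defs.
Variable R : realType.

Definition dotv (k : nat) (u v : 'cV[R]_k) : R := \sum_(i < k) u i 0 * v i 0.
Definition enorm (k : nat) (u : 'cV[R]_k) : R := Num.sqrt (dotv u u).

Definition ev (n : nat) (k : 'I_n) : 'cV[R]_n := delta_mx k 0.

Definition grad (n : nat) (f : 'cV[R]_n -> R) (z : 'cV[R]_n) : 'cV[R]_n :=
  \col_k derive f z (ev k).

(* transposed Jacobian  \nabla f(z) = [\nabla f_1(z) ... \nabla f_m(z)]  (n x m) *)
Definition jacT (n m : nat) (f : 'cV[R]_n -> 'cV[R]_m) (z : 'cV[R]_n) : 'M[R]_(n, m) :=
  \matrix_(k, j) (derive f z (ev k)) j 0.

Definition C2 (n : nat) (V : normedModType R) (f : 'cV[R]_n -> V) : Prop :=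
  (forall z, differentiable f z) /\
  (forall (k : 'I_n) z, differentiable (fun y => derive f y (ev k)) z) /\
  (forall (k l : 'I_n),
      continuous (fun y => derive (fun x => derive f x (ev k)) y (ev l))).

Definition bounded_C2_on (n : nat) (V : normedModType R) (f : 'cV[R]_n -> V)
    (Omega : set 'cV[R]_n) : Prop :=
  exists M : R, forall z, Omega z ->
    `|f z| <= M /\
    (forall k : 'I_n, `|derive f z (ev k)| <= M) /\
    (forall k l : 'I_n, `|derive (fun x => derive f x (ev k)) z (ev l)| <= M).

(* KKT triple of  min J s.t. g <= 0, h = 0 *)
Definition kkt (n m p : nat) (J : 'cV[R]_n -> R) (g : 'cV[R]_n -> 'cV[R]_m)
    (h : 'cV[R]_n -> 'cV[R]_p) (z : 'cV[R]_n) (lam : 'cV[R]_m) (nu : 'cV[R]_p) : Prop :=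
  grad J z + jacT g z *m lam + jacT h z *m nu = 0 /\
  (forall j, 0 <= lam j 0) /\ (forall j, g z j 0 <= 0) /\ h z = 0 /\
  (forall j, lam j 0 * g z j 0 = 0).

Definition critical (n m p : nat) (J : 'cV[R]_n -> R) (g : 'cV[R]_n -> 'cV[R]_m)
    (h : 'cV[R]_n -> 'cV[R]_p) (z : 'cV[R]_n) : Prop :=
  exists lam nu, kkt J g h z lam nu.

Definition in_C (n m p : nat) (g : 'cV[R]_n -> 'cV[R]_m) (h : 'cV[R]_n -> 'cV[R]_p)
    (z d : 'cV[R]_n) : Prop :=
  (forall j, (g z + (jacT g z)^T *m d) j 0 <= 0) /\ h z + (jacT h z)^T *m d = 0.

Definition Laug (n m p : nat) (J : 'cV[R]_n -> R) (g : 'cV[R]_n -> 'cV[R]_m)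
    (h : 'cV[R]_n -> 'cV[R]_p) (rho : R)
    (z : 'cV[R]_n) (lam : 'cV[R]_m) (nu : 'cV[R]_p) (s : 'cV[R]_m) : R :=
  J z + dotv (g z + s) lam + dotv (h z) nu
  + rho / 2 * enorm (g z + s) ^+ 2 + rho / 2 * enorm (h z) ^+ 2.

Definition slack (m : nat) (rho : R) (gz lam : 'cV[R]_m) : 'cV[R]_m :=
  \col_j (if rho == 0 then Num.max 0 (- gz j 0)
          else Num.max 0 (- gz j 0 - lam j 0 / rho)).

(* previous penalty: rho^{(i-1)}, with rho^{(-1)} = rho_init *)
Definition rho_prev (rho_init : R) (rho : nat -> R) (i : nat) : R :=
  if i is i'.+1 then rho i' else rho_init.

Definition seq_littleo (k l : nat) (a : nat -> 'cV[R]_k) (b : nat -> 'cV[R]_l) : Prop :=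
  forall eps : R, 0 < eps ->
    exists N : nat, forall i, (N <= i)%N -> enorm (a i) <= eps * enorm (b i).

Definition seq_bigO (k l : nat) (a : nat -> 'cV[R]_k) (b : nat -> 'cV[R]_l) : Prop :=
  exists (C : R) (N : nat), forall i, (N <= i)%N -> enorm (a i) <= C * enorm (b i).

End Defs.

(* Main.v *)
Require Import Defs.
From HB Require Import structures.
From mathcomp Require Import all_boot all_order all_algebra.
From mathcomp Require Import all_classical all_reals all_analysis.
From mathcomp Require Import ring lra.
Import Order.TTheory GRing.Theory Num.Theory.
Import numFieldNormedType.Exports.
Local Open Scope ring_scope.
Local Open Scope classical_set_scope.

Set Implicit Arguments. Unset Strict Implicit.

Section S1.
Variable R : realType.
Lemma isdM (a b : R -> R) (x da db : R) : is_derive x (1:R) a da -> is_derive x (1:R) b db ->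
  is_derive x (1:R) (fun t => a t * b t) (a x * db + b x * da).
Proof. move=> Ha Hb; have := is_deriveM Ha Hb; by []. Qed.

Lemma isdD (a b : R -> R) (x da db : R) : is_derive x (1:R) a da -> is_derive x (1:R) b db ->
  is_derive x (1:R) (fun t => a t + b t) (da + db).
Proof. move=> Ha Hb; have := is_deriveD Ha Hb; by []. Qed.

Lemma isdsum k (a : 'I_k -> R -> R) (x : R) da : (forall j, is_derive x (1:R) (a j) (da j)) ->
  is_derive x (1:R) (fun t => \sum_(j < k) a j t) (\sum_(j < k) da j).
Proof.
move=> H; have := is_derive_sum H.
suff -> : (\sum_(j < k) a j) = (fun t => \sum_(j < k) a j t) by [].
by apply/funext => t; rewrite fct_sumE.
Qed.

Lemma isdext (a b : R -> R) (x d : R) : (forall t, a t = b t) -> is_derive x (1:R) a d -> is_derive x (1:R) b d.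
Proof. by move=> H; have -> : a = b by apply/funext. Qed.

Lemma dotvC k (u v : 'cV[R]_k) : dotv u v = dotv v u.
Proof. by apply: eq_bigr => i _; rewrite mulrC. Qed.

Lemma dotvDl k (u v w : 'cV[R]_k) : dotv (u + v) w = dotv u w + dotv v w.
Proof. by rewrite /dotv -big_split; apply: eq_bigr => i _; rewrite mxE mulrDl. Qed.

Lemma dotvDr k (u v w : 'cV[R]_k) : dotv w (u + v) = dotv w u + dotv w v.
Proof. by rewrite dotvC dotvDl !(dotvC w). Qed.

Lemma dotvNl k (u w : 'cV[R]_k) : dotv (- u) w = - dotv u w.
Proof. by rewrite /dotv -sumrN; apply: eq_bigr => i _; rewrite mxE mulNr. Qed.

Lemma dotvNr k (u w : 'cV[R]_k) : dotv w (- u) = - dotv w u.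
Proof. by rewrite dotvC dotvNl dotvC. Qed.

Lemma dotvBl k (u v w : 'cV[R]_k) : dotv (u - v) w = dotv u w - dotv v w.
Proof. by rewrite dotvDl dotvNl. Qed.

Lemma dotvBr k (u v w : 'cV[R]_k) : dotv w (u - v) = dotv w u - dotv w v.
Proof. by rewrite dotvDr dotvNr. Qed.

Lemma dotvZl k a (u w : 'cV[R]_k) : dotv (a *: u) w = a * dotv u w.
Proof. by rewrite /dotv mulr_sumr; apply: eq_bigr => i _; rewrite mxE mulrA. Qed.

Lemma dotvZr k a (u w : 'cV[R]_k) : dotv w (a *: u) = a * dotv w u.
Proof. by rewrite dotvC dotvZl dotvC. Qed.

Lemma dotv_ge0 k (u : 'cV[R]_k) : 0 <= dotv u u.
Proof. by apply: sumr_ge0 => i _; rewrite -expr2 sqr_ge0. Qed.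

Lemma enorm2 k (u : 'cV[R]_k) : enorm u ^+ 2 = dotv u u.
Proof. by rewrite /enorm sqr_sqrtr // dotv_ge0. Qed.

Lemma enorm_ge0 k (u : 'cV[R]_k) : 0 <= enorm u.
Proof. exact: sqrtr_ge0. Qed.

Lemma dotv_mul k l (A : 'M[R]_(k, l)) (x : 'cV[R]_l) (y : 'cV[R]_k) :
  dotv (A *m x) y = dotv x (A^T *m y).
Proof.
rewrite /dotv.
under eq_bigr do rewrite mxE mulr_suml.
rewrite exchange_big /=; apply: eq_bigr => j _.
rewrite mxE mulr_sumr; apply: eq_bigr => i _.
by rewrite mxE mulrCA mulrA [A i j * _]mulrC.
Qed.

Lemma dotv_col k l (a c : 'cV[R]_k) (b d : 'cV[R]_l) :
  dotv (col_mx a b) (col_mx c d) = dotv a c + dotv b d.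
Proof.
rewrite /dotv big_split_ord /=; congr (_ + _); apply: eq_bigr => i _.
  by rewrite !col_mxEu.
by rewrite !col_mxEd.
Qed.

Lemma dotv0 k (u : 'cV[R]_k) : dotv u u = 0 -> u = 0.
Proof.
move=> H; apply/matrixP => i j; rewrite ord1 mxE.
have : \sum_(l < k) u l 0 * u l 0 = 0 := H.
move/eqP; rewrite psumr_eq0; last by move=> l _; rewrite -expr2 sqr_ge0.
move/allP => /(_ i (mem_index_enum _)) /=; rewrite mulf_eq0 orbb.
by move/eqP.
Qed.

Lemma dotv0l k (u : 'cV[R]_k) : dotv 0 u = 0.
Proof. by rewrite /dotv big1 // => i _; rewrite mxE mul0r. Qed.

Lemma cauchy_schwarz k (u v : 'cV[R]_k) : dotv u v <= enorm u * enorm v.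
Proof.
have [a0|a0] := eqVneq (enorm u) 0.
  have : dotv u u = 0 by move: a0; rewrite -enorm2 => ->; rewrite expr0n.
  by move/dotv0 => u0; rewrite {1}u0 dotv0l a0 mul0r.
have [b0|b0] := eqVneq (enorm v) 0.
  have : dotv v v = 0 by move: b0; rewrite -enorm2 => ->; rewrite expr0n.
  by move/dotv0 => v0; rewrite {1}v0 dotvC dotv0l b0 mulr0.
have ha : 0 < enorm u by rewrite lt_def a0 enorm_ge0.
have hb : 0 < enorm v by rewrite lt_def b0 enorm_ge0.
have := @dotv_ge0 k (enorm v *: u - enorm u *: v).
rewrite !(dotvBl, dotvBr, dotvZl, dotvZr) -!enorm2 (dotvC v u).
move=> H.
have hab : 0 < enorm u * enorm v by rewrite mulr_gt0.
rewrite -(ler_pM2l hab); nra.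
Qed.

End S1.

Section S2.
Variable R : realType.
Variable n : nat.
Lemma quot_eq (W : normedModType R) (f : 'cV[R]_n -> W) z dz :
  (fun h : R => h^-1 *: (((fun t : R => f (z + t *: dz)) \o shift 0) (h *: 1) - f (z + 0 *: dz)))
  = (fun h : R => h^-1 *: ((f \o shift z) (h *: dz) - f z)).
Proof.
apply/funext => h /=; rewrite scale0r addr0 addr0.
rewrite -[h%:A]/(h * 1) mulr1 (addrC z).
reflexivity.
Qed.

Lemma D1E (W : normedModType R) (f : 'cV[R]_n -> W) z dz :
  'D_1 (fun t : R => f (z + t *: dz)) 0 = 'D_dz f z.
Proof. by rewrite /derive quot_eq. Qed.

Lemma D1able (W : normedModType R) (f : 'cV[R]_n -> W) z dz :
  derivable f z dz -> derivable (fun t : R => f (z + t *: dz)) 0 1.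
Proof. by rewrite /derivable quot_eq. Qed.

Lemma ev_sum (dz : 'cV[R]_n) : dz = \sum_(k < n) dz k 0 *: ev R k.
Proof.
rewrite {1}(matrix_sum_delta dz); apply: eq_bigr => k _.
by rewrite big_ord1 /ev.
Qed.

Lemma dlin (W : normedModType R) (f : 'cV[R]_n -> W) z dz : differentiable f z ->
  'D_dz f z = \sum_(k < n) dz k 0 *: 'D_(ev R k) f z.
Proof.
move=> df; rewrite deriveE // {1}(ev_sum dz) linear_sum.
by apply: eq_bigr => k _; rewrite linearZ deriveE.
Qed.

Lemma isd_vec k (f : 'cV[R]_n -> 'cV[R]_k) z dz j : differentiable f z ->
  is_derive (0:R) (1:R) (fun t : R => f (z + t *: dz) j 0) (((jacT f z)^T *m dz) j 0).
Proof.
move=> df.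
have dF : derivable (fun t : R => f (z + t *: dz)) 0 1 by apply: D1able; exact: diff_derivable.
have := (derivable_mxP _ _ _).1 dF j 0 => dFj.
apply: DeriveDef => //.
have := derive_mx dF; rewrite D1E => HH.
have -> : 'D_1 (fun x : R => f (z + x *: dz) j 0) 0 = ('D_dz f z) j 0 by rewrite HH mxE.
rewrite dlin // summxE mxE; apply: eq_bigr => l _.
by rewrite !mxE mulrC.
Qed.

Lemma isd_scal (f : 'cV[R]_n -> R) z dz : differentiable f z ->
  is_derive (0:R) (1:R) (fun t : R => f (z + t *: dz)) (dotv (grad f z) dz).
Proof.
move=> df.
have dF : derivable (fun t : R => f (z + t *: dz)) 0 1 by apply: D1able; exact: diff_derivable.
apply: DeriveDef => //.
rewrite D1E dlin // /dotv; apply: eq_bigr => l _.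
by rewrite !mxE mulrC.
Qed.

End S2.

Section S3.
Variable R : realType.

Lemma isd_cst (c : R) : is_derive (0:R) (1:R) (fun _ : R => c) 0.
Proof. exact: is_derive_cst. Qed.

Lemma isd_lin (c d : R) : is_derive (0:R) (1:R) (fun t : R => c + t * d) d.
Proof.
have H1 : is_derive (0:R) (1:R) (fun t : R => t * d) d.
  have := isdM (@is_derive_id R R 0 1) (isd_cst d).
  by rewrite /= mulr0 add0r mulr1.
by have := isdD (isd_cst c) H1; rewrite add0r.
Qed.

Lemma isd_aff k (a b : 'cV[R]_k) j :
  is_derive (0:R) (1:R) (fun t : R => (a + t *: b) j 0) (b j 0).
Proof. by apply: isdext (isd_lin (a j 0) (b j 0)) => t; rewrite !mxE. Qed.

Lemma isd_dot k (U V : R -> 'cV[R]_k) (dU dV : 'cV[R]_k) :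
  (forall j, is_derive (0:R) (1:R) (fun t => U t j 0) (dU j 0)) ->
  (forall j, is_derive (0:R) (1:R) (fun t => V t j 0) (dV j 0)) ->
  is_derive (0:R) (1:R) (fun t => dotv (U t) (V t)) (dotv (U 0) dV + dotv dU (V 0)).
Proof.
move=> HU HV.
have := isdsum (fun j => isdM (HU j) (HV j)).
rewrite /dotv -big_split /=.
have -> : \sum_(i < k) (U 0 i 0 * dV i 0 + V 0 i 0 * dU i 0) =
          \sum_(i < k) (U 0 i 0 * dV i 0 + dU i 0 * V 0 i 0).
  by apply: eq_bigr => i _; rewrite (mulrC (V 0 i 0)).
by [].
Qed.

End S3.

Section S4.
Variable R : realType.
Variables n m p : nat.
Variables (J : 'cV[R]_n -> R) (g : 'cV[R]_n -> 'cV[R]_m) (h : 'cV[R]_n -> 'cV[R]_p).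

Lemma isd_gs z dz (s ds : 'cV[R]_m) j : differentiable g z ->
  is_derive (0:R) (1:R) (fun t : R => (g (z + t *: dz) + (s + t *: ds)) j 0)
     (((jacT g z)^T *m dz + ds) j 0).
Proof.
move=> dg.
have := isdD (isd_vec dz j dg) (isd_aff s ds j).
move=> H.
have -> : ((jacT g z)^T *m dz + ds) j 0 = ((jacT g z)^T *m dz) j 0 + ds j 0 by rewrite [LHS]mxE.
by apply: isdext H => t; rewrite [RHS]mxE.
Qed.

Lemma phi_derive r z dz (lam dl : 'cV[R]_m) (nu dn : 'cV[R]_p) (s ds : 'cV[R]_m) :
  differentiable J z -> differentiable g z -> differentiable h z ->
  derive1 (fun tt => Laug J g h r (z + tt *: dz) (lam + tt *: dl) (nu + tt *: dn) (s + tt *: ds)) 0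
  = dotv (grad J z) dz
    + (dotv (g z + s) dl + dotv ((jacT g z)^T *m dz + ds) lam)
    + (dotv (h z) dn + dotv ((jacT h z)^T *m dz) nu)
    + r / 2 * (dotv (g z + s) ((jacT g z)^T *m dz + ds) + dotv ((jacT g z)^T *m dz + ds) (g z + s))
    + r / 2 * (dotv (h z) ((jacT h z)^T *m dz) + dotv ((jacT h z)^T *m dz) (h z)).
Proof.
move=> dJ dg dh.
have E0 : forall k (a b : 'cV[R]_k), a + 0 *: b = a by move=> k a b; rewrite scale0r addr0.
have HJ := isd_scal dz dJ.
have HG := isd_dot (U := fun t : R => g (z + t *: dz) + (s + t *: ds))
                   (V := fun t : R => lam + t *: dl) (fun j => @isd_gs z dz s ds j dg) (fun j => @isd_aff R m lam dl j).
have HH := isd_dot (U := fun t : R => h (z + t *: dz))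
                   (V := fun t : R => nu + t *: dn) (fun j => @isd_vec R n p h z dz j dh) (fun j => @isd_aff R p nu dn j).
have HG2 := isd_dot (U := fun t : R => g (z + t *: dz) + (s + t *: ds))
                   (V := fun t : R => g (z + t *: dz) + (s + t *: ds)) (fun j => @isd_gs z dz s ds j dg) (fun j => @isd_gs z dz s ds j dg).
have HH2 := isd_dot (U := fun t : R => h (z + t *: dz))
                   (V := fun t : R => h (z + t *: dz)) (fun j => @isd_vec R n p h z dz j dh) (fun j => @isd_vec R n p h z dz j dh).
have HG3 := isdM (isd_cst (r / 2)) HG2.
have HH3 := isdM (isd_cst (r / 2)) HH2.
have := isdD (isdD (isdD (isdD HJ HG) HH) HG3) HH3.
rewrite /= !E0 !mulr0 !addr0 => Hall.
rewrite derive1E; apply: derive_val.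
apply: isdext Hall => t.
by rewrite /Laug !enorm2.
Qed.


Lemma dphi_le r z dz (lam lamG : 'cV[R]_m) (nu nuG : 'cV[R]_p) (s : 'cV[R]_m) alpha :
  differentiable J z -> differentiable g z -> differentiable h z ->
  in_C g h z dz ->
  grad J z + alpha^-1 *: dz + jacT g z *m lamG + jacT h z *m nuG = 0 ->
  (forall j, lamG j 0 * (g z + (jacT g z)^T *m dz) j 0 = 0) ->
  (forall j, 0 <= lamG j 0) -> (forall j, 0 <= s j 0) ->
  derive1 (fun tt => Laug J g h r (z + tt *: dz) (lam + tt *: (lamG - lam))
     (nu + tt *: (nuG - nu)) (s + tt *: (- (g z + (jacT g z)^T *m dz + s)))) 0
  <= - (dotv dz dz / alpha)
     + 2 * dotv (col_mx (lamG - lam) (nuG - nu)) (col_mx (g z + s) (h z))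
     - r * dotv (col_mx (g z + s) (h z)) (col_mx (g z + s) (h z)).
Proof.
move=> dJ dg dh [_ hC] stat compl lG0 s0.
rewrite phi_derive //.
set Dg := (jacT g z)^T *m dz.
set Dh := (jacT h z)^T *m dz.
have hDh : Dh = - h z by apply/eqP; rewrite -addr_eq0 addrC hC.
have hU : Dg + - (g z + Dg + s) = - (g z + s).
  by rewrite !opprD addrA (addrCA Dg) subrr addr0.
rewrite hU hDh.
have Hst : dotv (grad J z) dz + alpha^-1 * dotv dz dz + dotv lamG Dg + dotv nuG Dh = 0.
  have := congr1 (fun v => dotv v dz) stat.
  by rewrite /= !dotvDl dotvZl !dotv_mul dotv0l.
have Hc : dotv lamG (g z + Dg) = 0.
  by rewrite /dotv big1 // => j _; rewrite compl.
have Hs : 0 <= dotv s lamG.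
  by apply: sumr_ge0 => j _; rewrite mulr_ge0.
rewrite hDh in Hst.
rewrite !dotv_col.
rewrite !(dotvDl, dotvDr, dotvNl, dotvNr, dotvBl, dotvBr) in Hst Hc *.
have E1 := dotvC lamG (g z). have E2 := dotvC lamG s. have E3 := dotvC lam (g z).
have E4 := dotvC lam s. have E5 := dotvC nuG (h z). have E6 := dotvC nu (h z).
have E7 := dotvC (g z) s.
have Ea : dotv dz dz / alpha = alpha^-1 * dotv dz dz by rewrite mulrC.
rewrite Ea.
nra.
Qed.

End S4.

Section N.
Variable R : realFieldType.

Lemma numA (a amax C E D Cn X r : R) : 0 < a -> a <= amax -> 0 < C -> 0 <= E -> 0 <= D ->
  0 <= Cn -> D <= C * E -> X <= D * Cn -> 2 * amax * C ^+ 2 <= r ->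
  - (E ^+ 2 / a) + 2 * X - r * Cn ^+ 2 <= - (E ^+ 2 / (2 * a)).
Proof.
move=> a0 aM C0 E0 D0 Cn0 DC XD Kr.
have q0 : 0 < a^-1 by rewrite invr_gt0.
have e1 : E ^+ 2 / (2 * a) = E ^+ 2 * a^-1 / 2 by rewrite invfM; field; lra.
have e2 : E ^+ 2 / a = E ^+ 2 * a^-1 by [].
rewrite e1.
have qa : a^-1 * a = 1 by rewrite mulVf // gt_eqF.
set q := a^-1 in q0 e1 e2 qa *.
have h1 : 2 * X <= 2 * C * E * Cn by nra.
have h2 : 0 <= (E - 2 * a * C * Cn) ^+ 2 by rewrite sqr_ge0.
have h3 : 2 * a * C ^+ 2 * Cn ^+ 2 <= r * Cn ^+ 2.
  apply: ler_wpM2r; first by rewrite sqr_ge0.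
  apply: le_trans Kr; nra.
have h4 : 2 * C * E * Cn - 2 * a * C ^+ 2 * Cn ^+ 2 <= E ^+ 2 * q / 2.
  have : 2 * a * C * E * Cn - 2 * a ^+ 2 * C ^+ 2 * Cn ^+ 2 <= E ^+ 2 / 2 by nra.
  move=> H; have : a * (2 * C * E * Cn - 2 * a * C ^+ 2 * Cn ^+ 2) <= a * (E ^+ 2 * q / 2).
    have -> : a * (E ^+ 2 * q / 2) = E ^+ 2 / 2 by rewrite /q; field; rewrite gt_eqF.
    nra.
  by rewrite ler_pM2l.
lra.
Qed.

Lemma numB (a amax C E D Cn X r : R) : 0 < a -> a <= amax -> 0 < C -> 0 <= E -> 0 <= D ->
  0 <= Cn -> D <= C * E -> X <= D * Cn -> 0 <= r ->
  - (E ^+ 2 / (2 * a)) < - (E ^+ 2 / a) + 2 * X - r * Cn ^+ 2 ->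
  2 * D / Cn <= 8 * amax * C ^+ 2.
Proof.
move=> a0 aM C0 E0 D0 Cn0 DC XD r0 H.
have am : 0 <= amax by lra.
have K0 : 0 <= 8 * amax * C ^+ 2 by rewrite mulr_ge0 ?sqr_ge0 // mulr_ge0.
have [->|Cnp] := eqVneq Cn 0; first by rewrite invr0 mulr0.
have Cnp' : 0 < Cn by rewrite lt_def Cnp Cn0.
rewrite ler_pdivrMr //.
have e1 : E ^+ 2 / (2 * a) = E ^+ 2 * a^-1 / 2 by rewrite invfM; field; lra.
have e2 : E ^+ 2 / a = E ^+ 2 * a^-1 by [].
rewrite e1 in H.
have qa : a^-1 * a = 1 by rewrite mulVf // gt_eqF.
have q0 : 0 < a^-1 by rewrite invr_gt0.
set q := a^-1 in q0 qa H.
have h1 : E ^+ 2 * q < 4 * D * Cn by nra.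
have h2 : E ^+ 2 < 4 * a * D * Cn.
  have : a * (E ^+ 2 * q) < a * (4 * D * Cn) by rewrite ltr_pM2l.
  have -> : a * (E ^+ 2 * q) = E ^+ 2 by rewrite /q; field; rewrite gt_eqF.
  lra.
have h3 : E ^+ 2 <= 4 * amax * D * Cn by nra.
have h4 : D ^+ 2 <= C ^+ 2 * E ^+ 2 by nra.
have [->|Dp] := eqVneq D 0; first by nra.
have Dp' : 0 < D by rewrite lt_def Dp D0.
have h5 : D ^+ 2 <= D * (4 * amax * C ^+ 2 * Cn) by nra.
have h6 : D <= 4 * amax * C ^+ 2 * Cn.
  by rewrite -(ler_pM2l Dp') -expr2.
lra.
Qed.

End N.

Unset Implicit Arguments. Set Strict Implicit.

Theorem lemma4p11 (R : realType) (n m p : nat)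
  (J : 'cV[R]_n -> R) (g : 'cV[R]_n -> 'cV[R]_m) (h : 'cV[R]_n -> 'cV[R]_p)
  (Omega : set 'cV[R]_n) (sigma1 sigma2 rho_init : R)
  (alpha t rho : nat -> R)
  (z dz : nat -> 'cV[R]_n) (lam lamG : nat -> 'cV[R]_m) (nu nuG : nat -> 'cV[R]_p)
  (zs : 'cV[R]_n) (lams : 'cV[R]_m) (nus : 'cV[R]_p) :
  (* problem data *)
  C2 J -> C2 g -> C2 h ->
  finite_set [set x | critical J g h x] ->
  (* convergence of the iterates to a critical point with KKT triple (zs, lams, nus) *)
  z @ \oo --> zs ->
  kkt J g h zs lams nus ->
  (* algorithm parameters *)
  0 < sigma1 -> sigma1 <= sigma2 -> sigma2 < 1 / 2 ->
  0 <= rho_init ->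
  (exists amax : R, forall i, 0 < alpha i <= amax) ->
  (* projection step: dz i is the Euclidean projection of -alpha i * grad J onto C^{(i)},
     with KKT multipliers (lamG i, nuG i) *)
  (forall i, in_C g h (z i) (dz i)) ->
  (forall i d, in_C g h (z i) d ->
     enorm (dz i + alpha i *: grad J (z i)) <= enorm (d + alpha i *: grad J (z i))) ->
  (forall i, grad J (z i) + (alpha i)^-1 *: dz i
             + jacT g (z i) *m lamG i + jacT h (z i) *m nuG i = 0) ->
  (forall i j, 0 <= lamG i j 0) ->
  (forall i j, lamG i j 0 * (g (z i) + (jacT g (z i))^T *m dz i) j 0 = 0) ->
  (* initial multipliers *)
  lam 0%N = lamG 0%N -> nu 0%N = nuG 0%N ->
  (let dlam i := lamG i - lam i in
   let dnu i := nuG i - nu i in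
   let s i := slack (rho_prev rho_init rho i) (g (z i)) (lam i) in
   let ds i := - (g (z i) + (jacT g (z i))^T *m dz i + s i) in
   let phi i r tt := Laug J g h r (z i + tt *: dz i) (lam i + tt *: dlam i)
                                  (nu i + tt *: dnu i) (s i + tt *: ds i) in
   let dphi i r tt := derive1 (phi i r) tt in
   let rhohat i := 2 * enorm (col_mx (dlam i) (dnu i))
                   / enorm (col_mx (g (z i) + s i) (h (z i))) in
   (* penalty update *)
   (forall i, rho i = if dphi i (rho_prev rho_init rho i) 0
                         <= - (enorm (dz i) ^+ 2 / (2 * alpha i))
                      then rho_prev rho_init rho i
                      else Num.max (rhohat i) (2 * rho_prev rho_init rho i)) ->
   (* Wolfe step size *)
   (forall i, 0 < t i <= 1) ->
   (forall i, phi i (rho i) (t i) - phi i (rho i) 0 <= sigma1 * t i * dphi i (rho i) 0) ->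
   (forall i, `|dphi i (rho i) (t i)| <= - sigma2 * dphi i (rho i) 0 \/
              (t i = 1 /\ dphi i (rho i) 1 <= - sigma2 * dphi i (rho i) 0)) ->
   (* updates *)
   (forall i, z i.+1 = z i + t i *: dz i) ->
   (forall i, lam i.+1 = lam i + t i *: dlam i) ->
   (forall i, nu i.+1 = nu i + t i *: dnu i) ->
   (* standing assumptions *)
   (forall i, exists d, in_C g h (z i) d) ->
   compact Omega ->
   (forall i, Omega (z i) /\ Omega (z i + dz i)) ->
   bounded_C2_on J Omega -> bounded_C2_on g Omega -> bounded_C2_on h Omega ->
   (* Assumption (R) *)
   (forall i (a : 'cV[R]_p) (b : 'cV[R]_m),
      (forall j, (g (z i) + (jacT g (z i))^T *m dz i) j 0 < 0 -> b j 0 = 0) ->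
      jacT h (z i) *m a + jacT g (z i) *m b = 0 -> a = 0 /\ b = 0) ->
   (forall i j, (g (z i) + (jacT g (z i))^T *m dz i) j 0 = 0 -> 0 < lamG i j 0) ->
   (* Assumption (A) *)
   seq_littleo (fun i => z i + dz i - zs) (fun i => z i - zs) ->
   seq_littleo (fun i => lam i + dlam i - lams) (fun i => lam i - lams) ->
   seq_littleo (fun i => nu i + dnu i - nus) (fun i => nu i - nus) ->
   seq_bigO (fun i => col_mx (dlam i) (dnu i)) dz ->
   (* conclusion *)
   exists rhobar : R, forall i, rho i <= rhobar).
Proof.
move=> C2J C2g C2h _ _ _ _ _ _ rho0 [amax Ha] HinC _ Hstat HlG Hcompl _ _.
move=> dlam dnu s ds phi dphi rhohat Hrho _ _ _ _ _ _ _ _ _ _ _ _ _ _ _ _ _ [C [N HO]].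
set rp := rho_prev rho_init rho.
have am : 0 < amax by case/andP: (Ha 0%N) => a0 aM; apply: lt_le_trans aM.
set C' := `|C| + 1.
have C'0 : 0 < C' by rewrite /C'; apply: ltr_pwDr => //.
set K := 2 * amax * C' ^+ 2.
have s0 : forall i j, 0 <= s i j 0.
  by move=> i j; rewrite /s /slack mxE; case: ifP => _; rewrite le_max lexx.
have Kf : forall i, dphi i (rp i) 0 <= - (dotv (dz i) (dz i) / alpha i)
     + 2 * dotv (col_mx (dlam i) (dnu i)) (col_mx (g (z i) + s i) (h (z i)))
     - rp i * dotv (col_mx (g (z i) + s i) (h (z i))) (col_mx (g (z i) + s i) (h (z i))).
  move=> i; apply: dphi_le.
  - exact: C2J.1.
  - exact: C2g.1.
  - exact: C2h.1.
  - exact: HinC.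
  - exact: Hstat.
  - exact: Hcompl.
  - exact: HlG.
  - exact: s0.
have rpos : forall i, 0 <= rp i /\ 0 <= rho i.
  elim=> [|i [IH1 IH2]].
    split=> //; rewrite Hrho -/(rp 0%N); case: ifP => _ //.
    by rewrite le_max; apply/orP; right; rewrite mulr_ge0.
  have h1 : 0 <= rp i.+1 by [].
  split=> //; rewrite Hrho -/(rp i.+1); case: ifP => _ //.
  by rewrite le_max; apply/orP; right; rewrite mulr_ge0.
have key : forall i, (N <= i)%N ->
   (K <= rp i -> dphi i (rp i) 0 <= - (enorm (dz i) ^+ 2 / (2 * alpha i))) /\
   (- (enorm (dz i) ^+ 2 / (2 * alpha i)) < dphi i (rp i) 0 -> rhohat i <= 8 * amax * C' ^+ 2).
  move=> i iN.
  have [a0 aM] := andP (Ha i).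
  have DC : enorm (col_mx (dlam i) (dnu i)) <= C' * enorm (dz i).
    apply: le_trans (HO i iN) _; apply: ler_wpM2r; first exact: enorm_ge0.
    by rewrite /C'; apply: le_trans (ler_norm C) _; rewrite lerDl.
  have CS := cauchy_schwarz (col_mx (dlam i) (dnu i)) (col_mx (g (z i) + s i) (h (z i))).
  have := Kf i; rewrite -!enorm2 => Kfi.
  split.
    move=> Kr; apply: le_trans Kfi _.
    have := (numA a0 aM C'0 (enorm_ge0 _) (enorm_ge0 _) (enorm_ge0 _) DC CS Kr).
    by move=> HH; apply: HH.
  move=> H; apply: (numB a0 aM C'0 (enorm_ge0 _) (enorm_ge0 _) (enorm_ge0 _) DC CS (rpos i).1).
  exact: lt_le_trans H Kfi.
set S := \sum_(j < N) `|rho j|.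
have S0 : 0 <= S by apply: sumr_ge0 => j _; exact: normr_ge0.
have B0 : 0 <= 8 * amax * C' ^+ 2 by rewrite mulr_ge0 ?sqr_ge0 // mulr_ge0 // ltW.
have K0 : 0 <= K by rewrite mulr_ge0 ?sqr_ge0 // mulr_ge0 // ltW.
set M := S + `|rho_init| + 8 * amax * C' ^+ 2 + 2 * K.
have ri0 := normr_ge0 rho_init.
exists M.
have step : forall i, rp i <= M -> rho i <= M.
  move=> i rpM; case: (ltnP i N) => [iN|iN].
    have h1 : `|rho i| <= S.
      rewrite /S (bigD1 (Ordinal iN)) //= lerDl.
      by apply: sumr_ge0 => j _; exact: normr_ge0.
    have := ler_norm (rho i); rewrite /M; lra.
  have [kA kB] := key i iN.
  rewrite (Hrho i) -/(rp i); case: ifP => Hc //.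
  move/negbT: Hc; rewrite -ltNge => Hc.
  have rK : rp i < K.
    rewrite ltNge; apply/negP => /kA; by rewrite leNgt Hc.
  have := kB Hc => hb.
  rewrite ge_max; apply/andP; split; rewrite /M; lra.
elim=> [|i IH]; apply: step => //.
by rewrite /rp /=; have := ler_norm rho_init; rewrite /M; lra.
Qed.
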